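(* Let $\sigma\in\,]-\tfrac52,\tfrac32[$, $\sigma\ne-\tfrac12$. Then, with two-sided constants independent of $(\lambda,\zeta)\in\mathbb{S}\times(\mathbb{Z}^2\setminus\{0\})$: - if $\sigma>-\tfrac12$: $M_\sigma(\lambda,\zeta)\sim\dfrac{\langle\zeta\rangle^{-\sigma}}{\langle\omega\rangle^2}$; - if $\sigma<-\tfrac12$: $M_\sigma(\lambda,\zeta)\sim\dfrac{\langle\zeta\rangle^{-\sigma}}{\langle\omega\rangle^2}\mathbf{1}_{\langle\zeta\rangle\ge\langle\omega\rangle^\kappa}+\dfrac{\langle\omega\rangle^{-\sigma}}{\langle\omega\rangle^{5/2}}\mathbf{1}_{\langle\zeta\rangle\le\langle\omega\rangle^\kappa}$, where $\kappa=\dfrac{2\sigma+1}{2\sigma}$.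
   Context: Fix $a>0$, $\nu>0$, $\alpha\in\mathbb{R}$, $\beta,\gamma>0$, $\Omega=\mathbb{T}^2\times(0,a)$, $\mathbb{T}^2=(\mathbb{R}/2\pi\mathbb{Z})^2$. Let $\mathcal{V}=\mathcal{V}_1\times\mathcal{V}_2$, where $\mathcal{V}_1$ is the closure in $H^1(\Omega)^2$ of smooth $(u,v)$ periodic in $x,y$, vanishing at $z=0,a$, with $\int_0^a(\partial_xu+\partial_yv)dz=0$, and $\mathcal{V}_2$ the closure in $H^1(\Omega)$ of smooth $\theta$ periodic in $x,y$ vanishing at $z=0,a$. For $X=(u,v,\theta),X'=(u',v',\theta')\in\mathcal{V}$ put $(X,X')_{\mathcal{H}}=\int_\Omega(u\bar u'+v\bar v'+\frac\beta\gamma\theta\bar\theta')$, $(X,X')_{\mathcal{V}}=\int_\Omega(\nabla u\cdot\nabla\bar u'+\nabla v\cdot\nabla\bar v'+\frac\beta\gamma\nabla\theta\cdot\nabla\bar\theta')$, $w=-\int_0^z(\partial_xu+\partial_yv)$, $w'=-\int_0^z(\partial_xu'+\partial_yv')$, $B(X,X')=-\int_\Omega\theta\bar w'+\int_\Omega w\bar\theta'$, $C(X,X')=-\int_\Omega v\bar u'+\int_\Omega u\bar v'$, $\langle PX,X'\rangle=\nu(X,X')_{\mathcal{V}}+\beta B(X,X')+\alpha C(X,X')$, and $\mathbb{V}_P=\{\lambda\in\mathbb{C}:\exists X\in\mathcal{V}\setminus\{0\},\ \lambda(X,X')_{\mathcal{H}}+\langle PX,X'\rangle=0\ \forall X'\in\mathcal{V}\}$.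 Let $\mathbb{S}=\{-\delta_2-\mu_1+i\mu_2:(\mu_1,\mu_2)\in\mathbb{R}^2,\ |\mu_2|\ge\mu_1/\delta_1\}$, where $\delta_1>0$ is small enough that $\mathbb{S}\cap\mathbb{V}_P=\emptyset$ and $\delta_2<\min(\frac{\nu\pi^2}{2a^2},\frac\nu2)$. For $\lambda\in\mathbb{S}$, $\zeta\in\mathbb{Z}^2$: $\langle\zeta\rangle=1+|\zeta|$, $\langle\omega\rangle^2=|\lambda|+\langle\zeta\rangle^2$, and $M_\sigma(\lambda,\zeta)=\big(\sum_{k\ge1}\frac{1}{k^2(k^4+\langle\omega\rangle^4)(k^2+\langle\zeta\rangle^2)^\sigma}\big)^{1/2}$ (finite for $\sigma>-\frac52$). $A\sim B$ means there are constants $C_1,C_2>0$ with $C_1B(\lambda,\zeta)\le A(\lambda,\zeta)\le C_2B(\lambda,\zeta)$ for all $(\lambda,\zeta)\in\mathbb{S}\times(\mathbb{Z}^2\setminus\{0\})$. *)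

(* Defs.v *)
From Stdlib Require Import Reals ZArith Lra.
From Coquelicot Require Import Coquelicot.
Open Scope R_scope.

Definition jz (z1 z2 : Z) : R := 1 + sqrt (IZR z1 ^ 2 + IZR z2 ^ 2).

Definition jw (lam : C) (z1 z2 : Z) : R := sqrt (Cmod lam + (jz z1 z2) ^ 2).

Definition M_term (sigma : R) (lam : C) (z1 z2 : Z) (k : nat) : R :=
  let kk := INR (S k) in
  / (kk ^ 2 * (kk ^ 4 + (jw lam z1 z2) ^ 4)
       * Rpower (kk ^ 2 + (jz z1 z2) ^ 2) sigma).

Definition M_sigma (sigma : R) (lam : C) (z1 z2 : Z) : R :=
  sqrt (Series (M_term sigma lam z1 z2)).

Definition in_S (d1 d2 : R) (lam : C) : Prop :=
  exists m1 m2 : R, lam = ((- d2 - m1)%R, m2) /\ Rabs m2 >= m1 / d1.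

Definition sim_on (d1 d2 : R) (A B : C -> Z -> Z -> R) : Prop :=
  exists C1 C2 : R, 0 < C1 /\ 0 < C2 /\
    forall (lam : C) (z1 z2 : Z), in_S d1 d2 lam -> (z1 <> 0%Z \/ z2 <> 0%Z) ->
      C1 * B lam z1 z2 <= A lam z1 z2 /\ A lam z1 z2 <= C2 * B lam z1 z2.

Definition ind_le (x y : R) : R := if Rle_dec x y then 1 else 0.

(* Main.v *)
Require Import Defs.
From Stdlib Require Import Reals ZArith Lra Lia.
From Coquelicot Require Import Coquelicot.
Open Scope R_scope.

Lemma series_bnd (u : nat -> R) (K : R) :
  (forall k, 0 <= u k) -> (forall N, sum_f_R0 u N <= K) ->
  Series u <= K /\ (forall N, sum_f_R0 u N <= Series u).
Proof.
  intros H0 HK.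
  assert (Hinc : forall n, sum_n u n <= sum_n u (S n)).
  { intros n. rewrite !sum_n_Reals. simpl. specialize (H0 (S n)). lra. }
  assert (Hb : forall n, sum_n u n <= K).
  { intros n. rewrite sum_n_Reals. apply HK. }
  destruct (ex_finite_lim_seq_incr _ _ Hinc Hb) as [l Hl].
  assert (HS : Series u = l).
  { unfold Series. rewrite (is_lim_seq_unique _ _ Hl). reflexivity. }
  rewrite HS. split.
  - assert (H := is_lim_seq_le _ (fun _ => K) l K Hb Hl (is_lim_seq_const K)).
    simpl in H. exact H.
  - intros N. rewrite <- sum_n_Reals. apply (is_lim_seq_incr_compare _ _ Hl Hinc).
Qed.


Lemma tele_up (u Y : nat -> R) : (forall k, u k <= Y k - Y (S k)) ->
  forall N, sum_f_R0 u N <= Y O - Y (S N).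
Proof. intros H N; induction N; simpl; [apply H|]. specialize (H (S N)); lra. Qed.

Lemma tele_low (u L : nat -> R) : (forall k, L (S k) - L k <= u k) ->
  forall N, L (S N) - L O <= sum_f_R0 u N.
Proof. intros H N; induction N; simpl; [apply H|]. specialize (H (S N)); lra. Qed.

Lemma exp_le (x y : R) : x <= y -> exp x <= exp y.
Proof. intros [H|H]; [left; apply exp_increasing; auto | subst; lra]. Qed.

Lemma exp_le_inv' (x y : R) : exp x <= exp y -> x <= y.
Proof. intros H. destruct (Rle_or_lt x y) as [h|h]; auto.
  apply exp_increasing in h; lra. Qed.

Lemma exp_m1_le (y : R) : 0 <= y -> exp y - 1 <= y * exp y.
Proof. intros Hy. pose proof (exp_ineq1_le (-y)). rewrite exp_Ropp in H.
  pose proof (exp_pos y).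
  assert (1 - y <= / exp y) by lra.
  apply (Rmult_le_compat_r (exp y)) in H1; [|lra].
  rewrite Rinv_l in H1; lra. Qed.

Lemma ln_h1 (x : R) : 0 < x -> ln (x+1) - ln x <= / x.
Proof. intros Hx. pose proof (exp_ineq1_le (/x)).
  assert (x + 1 <= x * exp (/x)).
  { replace (x+1) with (x * (1 + /x)) by (field; lra). apply Rmult_le_compat_l; lra. }
  apply ln_le in H0; [|lra]. rewrite ln_mult, ln_exp in H0; try lra. apply exp_pos. Qed.

Lemma ln_h2 (x : R) : 0 < x -> / (x+1) <= ln (x+1) - ln x.
Proof. intros Hx. pose proof (exp_ineq1_le (- /(x+1))).
  assert (x <= (x+1) * exp (- / (x+1))).
  { apply Rle_trans with ((x+1) * (1 + - /(x+1))).
    - right. field. lra.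
    - apply Rmult_le_compat_l; lra. }
  apply ln_le in H0; [|lra]. rewrite ln_mult, ln_exp in H0; try lra. apply exp_pos. Qed.

Lemma ln_pos' (x : R) : 1 <= x -> 0 <= ln x.
Proof. intros H. rewrite <- ln_1. apply ln_le; lra. Qed.

Lemma La (x q : R) : 1 <= x -> 0 < q ->
  q * exp (-(q+1) * ln 2) * exp ((-q-1) * ln x) <= exp (-q * ln x) - exp (-q * ln (x+1)).
Proof.
  intros Hx Hq. set (l := ln x). set (l1 := ln (x+1)).
  assert (Hh1 := ln_h2 x ltac:(lra)). fold l l1 in Hh1.
  assert (Hl1 : l1 <= ln 2 + l).
  { unfold l1, l. rewrite <- ln_mult by lra. apply ln_le; lra. }
  assert (E1 : exp (-q*l) - exp (-q*l1) = exp (-q*l1) * (exp (q*(l1 - l)) - 1)).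
  { rewrite Rmult_minus_distr_l, <- exp_plus. f_equal. f_equal. ring. ring. }
  rewrite E1.
  pose proof (exp_ineq1_le (q*(l1-l))).
  assert (Hx1 : / (x+1) = exp (- l1)). { unfold l1. rewrite exp_Ropp, exp_ln; lra. }
  apply Rle_trans with (exp (-q*l1) * (q * / (x+1))).
  2:{ apply Rmult_le_compat_l. left; apply exp_pos. apply Rle_trans with (q*(l1-l)); [|lra].
      apply Rmult_le_compat_l; lra. }
  rewrite Hx1.
  replace (exp (-q*l1) * (q * exp (-l1))) with (q * exp ((-q-1)*l1)).
  2:{ replace ((-q-1)*l1) with (-q*l1 + -l1) by ring. rewrite exp_plus. ring. }
  rewrite Rmult_assoc. apply Rmult_le_compat_l; [lra|].
  rewrite <- exp_plus. apply exp_le. nra.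
Qed.

Lemma Lb (x p : R) : 1 <= x -> 0 < p ->
  p / 2 * exp ((p-1) * ln x) <= exp (p * ln (x+1)) - exp (p * ln x).
Proof.
  intros Hx Hp. set (l := ln x). set (l1 := ln (x+1)).
  assert (Hh1 := ln_h2 x ltac:(lra)). fold l l1 in Hh1.
  assert (E1 : exp (p*l1) - exp (p*l) = exp (p*l) * (exp (p*(l1 - l)) - 1)).
  { rewrite Rmult_minus_distr_l, <- exp_plus. f_equal. f_equal. ring. ring. }
  rewrite E1. pose proof (exp_ineq1_le (p*(l1-l))).
  assert (Hx1 : / x = exp (- l)). { unfold l. rewrite exp_Ropp, exp_ln; lra. }
  replace ((p-1)*l) with (p*l + -l) by ring. rewrite exp_plus, <- Hx1.
  pose proof (exp_pos (p*l)).
  assert (p / 2 * / x <= p * (l1 - l)).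
  { apply Rle_trans with (p * / (x+1)); [|apply Rmult_le_compat_l; lra].
    unfold Rdiv. rewrite Rmult_assoc. apply Rmult_le_compat_l; [lra|].
    rewrite <- Rinv_mult. apply Rinv_le_contravar; lra. }
  nra.
Qed.

Lemma Lc (x p : R) : 1 <= x -> 0 < p ->
  exp (p * ln (x+1)) - exp (p * ln x) <= p * exp p * exp ((p-1) * ln x).
Proof.
  intros Hx Hp. set (l := ln x). set (l1 := ln (x+1)).
  assert (Hh1 := ln_h1 x ltac:(lra)). fold l l1 in Hh1.
  assert (Hh2 := ln_h2 x ltac:(lra)). fold l l1 in Hh2.
  assert (E1 : exp (p*l1) - exp (p*l) = exp (p*l) * (exp (p*(l1 - l)) - 1)).
  { rewrite Rmult_minus_distr_l, <- exp_plus. f_equal. f_equal. ring. ring. }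
  rewrite E1.
  assert (Hx1 : / x = exp (- l)). { unfold l. rewrite exp_Ropp, exp_ln; lra. }
  replace ((p-1)*l) with (p*l + -l) by ring. rewrite exp_plus, <- Hx1.
  pose proof (exp_pos (p*l)).
  assert (Hix : / x <= 1). { rewrite <- Rinv_1. apply Rinv_le_contravar; lra. }
  assert (Hpos : 0 < / (x+1)) by (apply Rinv_0_lt_compat; lra).
  assert (H1 : 0 <= p * (l1 - l)) by nra.
  pose proof (exp_m1_le _ H1).
  assert (exp (p*(l1-l)) <= exp p) by (apply exp_le; nra).
  assert (p*(l1-l) <= p * / x) by (apply Rmult_le_compat_l; lra).
  pose proof (exp_pos (p*(l1-l))).
  assert (exp (p * (l1 - l)) - 1 <= p * exp p * / x).
  { apply Rle_trans with (p*(l1-l) * exp (p*(l1-l))); auto.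
    apply Rle_trans with (p * / x * exp p). apply Rmult_le_compat; lra. nra. }
  apply Rle_trans with (exp (p*l) * (p * exp p * / x)); [apply Rmult_le_compat_l; lra | right; ring].
Qed.


Definition tm (sg Z W : R) (k : nat) : R :=
  let kk := INR (S k) in
  / (kk ^ 2 * (kk ^ 4 + W ^ 4) * Rpower (kk ^ 2 + Z ^ 2) sg).

Lemma pow_exp (x : R) (n : nat) : 0 < x -> x ^ n = exp (INR n * ln x).
Proof. intros H. rewrite <- Rpower_pow by auto. reflexivity. Qed.

Lemma INR_S_ge1 (k : nat) : 1 <= INR (S k).
Proof. rewrite S_INR. pose proof (pos_INR k). lra. Qed.

Lemma tm_exp (sg Z W : R) (k : nat) : 0 < Z -> 0 < W ->
  tm sg Z W k = / (exp (2 * ln (INR (S k))) * (exp (4 * ln (INR (S k))) + exp (4 * ln W))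
     * exp (sg * ln (exp (2 * ln (INR (S k))) + exp (2 * ln Z)))).
Proof.
  intros HZ HW. unfold tm, Rpower. pose proof (INR_S_ge1 k).
  rewrite !pow_exp by lra. simpl INR. repeat f_equal; ring.
Qed.

Lemma LSE_ge1 (a b : R) : a <= ln (exp a + exp b).
Proof. rewrite <- (ln_exp a) at 1. apply ln_le. apply exp_pos. pose proof (exp_pos b); lra. Qed.
Lemma LSE_ge2 (a b : R) : b <= ln (exp a + exp b).
Proof. rewrite <- (ln_exp b) at 1. apply ln_le. apply exp_pos. pose proof (exp_pos a); lra. Qed.
Lemma LSE_le (a b : R) : a <= b -> ln (exp a + exp b) <= ln 2 + b.
Proof. intros H. rewrite <- (ln_exp b) at 2. rewrite <- ln_mult by (try apply exp_pos; lra).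
  apply ln_le. pose proof (exp_pos a); pose proof (exp_pos b); lra.
  pose proof (exp_le _ _ H). lra. Qed.
Lemma LSE_le' (a b : R) : b <= a -> ln (exp a + exp b) <= ln 2 + a.
Proof. intros H. rewrite Rplus_comm. apply LSE_le; auto. Qed.

Lemma ln2_pos : 0 < ln 2.
Proof. rewrite <- ln_1. apply ln_increasing; lra. Qed.

Section T.
Variables (sg Z W : R) (k : nat).
Hypotheses (HZ : 0 < Z) (HW : 0 < W).
Let l := ln (INR (S k)).
Let L := ln (exp (2 * l) + exp (2 * ln Z)).

Lemma tm_up1 : tm sg Z W k <= exp (-2*l - 4*ln W - sg * L).
Proof.
  rewrite tm_exp by auto. fold l. fold L.
  replace (-2*l - 4*ln W - sg*L) with (- (2*l + 4 * ln W + sg*L)) by ring.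
  rewrite exp_Ropp, !exp_plus. pose proof (exp_pos (2*l)); pose proof (exp_pos (4*l));
  pose proof (exp_pos (4*ln W)); pose proof (exp_pos (sg*L)).
  apply Rinv_le_contravar. repeat apply Rmult_lt_0_compat; auto.
  apply Rmult_le_compat_r; [lra|]. apply Rmult_le_compat_l; lra.
Qed.

Lemma tm_up2 : tm sg Z W k <= exp (-6*l - sg * L).
Proof.
  rewrite tm_exp by auto. fold l. fold L.
  replace (-6*l - sg*L) with (- (2*l + 4 * l + sg*L)) by ring.
  rewrite exp_Ropp, !exp_plus. pose proof (exp_pos (2*l)); pose proof (exp_pos (4*l));
  pose proof (exp_pos (4*ln W)); pose proof (exp_pos (sg*L)).
  apply Rinv_le_contravar. repeat apply Rmult_lt_0_compat; auto.
  apply Rmult_le_compat_r; [lra|]. apply Rmult_le_compat_l; lra.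
Qed.

Lemma tm_low : l <= ln W -> / 2 * exp (-2*l - 4*ln W - sg * L) <= tm sg Z W k.
Proof.
  intros Hl. rewrite tm_exp by auto. fold l. fold L.
  replace (-2*l - 4*ln W - sg*L) with (- (2*l + 4 * ln W + sg*L)) by ring.
  rewrite exp_Ropp, !exp_plus. pose proof (exp_pos (2*l)); pose proof (exp_pos (4*l));
  pose proof (exp_pos (4*ln W)); pose proof (exp_pos (sg*L)).
  assert (exp (4*l) <= exp (4 * ln W)) by (apply exp_le; lra).
  rewrite <- Rinv_mult. apply Rinv_le_contravar. repeat apply Rmult_lt_0_compat; auto; lra.
  apply Rle_trans with (exp (2*l) * (2 * exp (4 * ln W)) * exp (sg*L)); [|right; ring].
  apply Rmult_le_compat_r; [lra|]. apply Rmult_le_compat_l; lra.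
Qed.

Lemma tm_pos : 0 < tm sg Z W k.
Proof. rewrite tm_exp by auto. apply Rinv_0_lt_compat.
  repeat apply Rmult_lt_0_compat; try apply exp_pos. pose proof (exp_pos (4*l)); pose proof (exp_pos (4*ln W)); fold l; lra. Qed.
End T.


Lemma exp_m2ln (x : R) : 0 < x -> exp (-2 * ln x) = / (x * x).
Proof. intros H. replace (-2 * ln x) with (- (ln x + ln x)) by ring.
  rewrite exp_Ropp, exp_plus, exp_ln; auto. Qed.

Lemma step_inv2 (A x : R) : 0 <= A -> 1 <= x -> A * / (x * x) <= 2 * A / x - 2 * A / (x + 1).
Proof. intros HA Hx.
  replace (2 * A / x - 2 * A / (x + 1)) with (A * (2 / (x * (x+1)))) by (field; lra).
  apply Rmult_le_compat_l; auto. unfold Rdiv.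
  apply Rle_trans with (2 * / (x * (2 * x))).
  - right. field. lra.
  - apply Rmult_le_compat_l; [lra|]. apply Rinv_le_contravar; nra. Qed.

Lemma U_pos (sg Z W : R) : 0 <= sg -> 2 <= Z -> Z <= W ->
  forall N, sum_f_R0 (tm sg Z W) N <= 2 * exp (-4 * ln W - 2 * sg * ln Z).
Proof.
  intros Hs HZ HZW. set (A := exp (-4 * ln W - 2 * sg * ln Z)).
  assert (HA : 0 <= A) by (left; apply exp_pos).
  intros N. pose (Y := fun k => 2 * A / INR (S k)).
  apply Rle_trans with (Y O - Y (S N)).
  2:{ unfold Y. replace (INR (S O)) with 1 by (simpl; ring). unfold Rdiv at 1; rewrite Rinv_1.
      assert (0 <= 2 * A / INR (S (S N))).
      { unfold Rdiv. apply Rmult_le_pos; [lra|]. left; apply Rinv_0_lt_compat; pose proof (INR_S_ge1 (S N)); lra. }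
      lra. }
  apply tele_up. intros k. unfold Y. rewrite (S_INR (S k)).
  pose proof (INR_S_ge1 k). set (x := INR (S k)) in *.
  eapply Rle_trans; [apply tm_up1; lra|].
  fold x. set (l := ln x).
  assert (HL := LSE_ge2 (2*l) (2 * ln Z)).
  apply Rle_trans with (A * exp (-2 * l)).
  { unfold A. rewrite <- exp_plus. apply exp_le. nra. }
  unfold l. rewrite exp_m2ln by lra. apply step_inv2; auto.
Qed.

Lemma tele_bound (u Y : nat -> R) : (forall k, u k <= Y k - Y (S k)) -> (forall k, 0 <= Y k) ->
  forall N, sum_f_R0 u N <= Y O.
Proof. intros H H0 N. pose proof (tele_up u Y H N). pose proof (H0 (S N)). lra. Qed.

Lemma ln_INR1 : ln (INR (S O)) = 0.
Proof. replace (INR (S O)) with 1 by (simpl; ring). apply ln_1. Qed.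

Lemma U_mid (sg Z W : R) : -1/2 < sg -> sg < 0 -> 2 <= Z -> Z <= W ->
  forall N, sum_f_R0 (tm sg Z W) N <=
    exp (- sg * ln 2) * (2 + / ((1 + 2*sg) * exp (-((1+2*sg)+1) * ln 2)))
      * exp (-4 * ln W - 2 * sg * ln Z).
Proof.
  intros Hs1 Hs2 HZ HZW. set (A := exp (-4 * ln W - 2 * sg * ln Z)).
  set (q := 1 + 2*sg). set (cq := exp (-(q+1) * ln 2)). set (K0 := exp (- sg * ln 2)).
  set (E4 := exp (-4 * ln W)).
  assert (Hq : 0 < q) by (unfold q; lra).
  assert (HA : 0 <= A) by (left; apply exp_pos).
  assert (Hcq : 0 < cq) by apply exp_pos.
  assert (HK0 : 0 < K0) by apply exp_pos.
  assert (HE4 : 0 < E4) by apply exp_pos.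
  assert (HlZ : 0 <= ln Z) by (apply ln_pos'; lra).
  assert (HE4A : E4 <= A) by (apply exp_le; nra).
  assert (Hiq : 0 < / (q * cq)) by (apply Rinv_0_lt_compat; nra).
  intros N. pose (Y := fun k => K0 * (2 * A / INR (S k) + E4 * / (q * cq) * exp (- q * ln (INR (S k))))).
  apply Rle_trans with (Y O).
  2:{ unfold Y. rewrite ln_INR1. replace (INR (S O)) with 1 by (simpl; ring).
      replace (-q*0) with 0 by ring. rewrite exp_0.
      fold q cq. apply Rle_trans with (K0 * ((2 + / (q*cq)) * A)); [| right; ring].
      apply Rmult_le_compat_l; [lra|]. apply Rle_trans with (2 * A + A * / (q * cq)); [|right; field; split; lra].
      unfold Rdiv; rewrite Rinv_1. rewrite !Rmult_1_r. apply Rplus_le_compat_l.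
      apply Rmult_le_compat_r; lra. }
  apply tele_bound.
  2:{ intros k. unfold Y. pose proof (INR_S_ge1 k). pose proof (exp_pos (- q * ln (INR (S k)))).
      apply Rmult_le_pos; [lra|]. apply Rplus_le_le_0_compat.
      unfold Rdiv. apply Rmult_le_pos; [lra|]. left; apply Rinv_0_lt_compat; lra.
      apply Rmult_le_pos; [|lra]. apply Rmult_le_pos; lra. }
  intros k. unfold Y. rewrite (S_INR (S k)).
  pose proof (INR_S_ge1 k). set (x := INR (S k)) in *.
  assert (Hstep1 := step_inv2 A x HA H).
  assert (Hstep2 := La x q H Hq). fold cq in Hstep2.
  assert (Hl : 0 <= ln x) by (apply ln_pos'; lra).
  apply Rle_trans with (K0 * (A * / (x*x) + E4 * exp ((-q-1) * ln x))).
  2:{ apply Rle_trans with (K0 * ((2 * A / x - 2 * A / (x + 1)) +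
        E4 * / (q * cq) * (exp (- q * ln x) - exp (- q * ln (x + 1))))); [|right; ring].
      apply Rmult_le_compat_l; [lra|]. apply Rplus_le_compat; auto.
      rewrite Rmult_assoc. apply Rmult_le_compat_l; [lra|].
      apply Rle_trans with (/ (q * cq) * (q * cq * exp ((- q - 1) * ln x))).
      right; field; lra. apply Rmult_le_compat_l; lra. }
  eapply Rle_trans; [apply tm_up1; lra|].
  fold x. set (l := ln x) in *. rewrite <- exp_m2ln by lra. fold l.
  pose proof (exp_pos (-2*l)). pose proof (exp_pos ((-q-1)*l)).
  destruct (Rle_or_lt l (ln Z)) as [Hc|Hc].
  - assert (HL := LSE_le (2*l) (2 * ln Z) ltac:(lra)).
    apply Rle_trans with (K0 * (A * exp (-2*l))); [|apply Rmult_le_compat_l; nra].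
    unfold K0, A. rewrite <- !exp_plus. apply exp_le. nra.
  - assert (HL := LSE_le' (2*l) (2 * ln Z) ltac:(lra)).
    apply Rle_trans with (K0 * (E4 * exp ((-q-1)*l))); [|apply Rmult_le_compat_l; nra].
    unfold K0, E4, q. rewrite <- !exp_plus. apply exp_le. nra.
Qed.

Definition Phi (p q2 K2 W x : R) : R :=
  if Rle_dec x W then 2 / p * exp (-4 * ln W) * (exp (p * ln (W+1)) - exp (p * ln x)) + K2 * exp (- q2 * ln W)
  else K2 * exp (- q2 * ln x).

Lemma U_neg (sg Z W : R) : -5/2 < sg -> sg < -1/2 -> 2 <= Z -> Z <= W ->
  forall N, sum_f_R0 (tm sg Z W) N <=
    exp (- sg * ln 2) * (2 * exp (-4 * ln W - 2 * sg * ln Z)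
      + (2 / (-2*sg-1) * exp ((-2*sg-1) * ln 2) + / ((5+2*sg) * exp (-((5+2*sg)+1) * ln 2)))
        * exp ((-2*sg-5) * ln W)).
Proof.
  intros Hs1 Hs2 HZ HZW. set (A := exp (-4 * ln W - 2 * sg * ln Z)).
  set (B := exp ((-2*sg-5) * ln W)).
  set (p := -2*sg-1). set (q2 := 5 + 2*sg).
  set (c2 := exp (-(q2+1) * ln 2)). set (K2 := / (q2 * c2)). set (K0 := exp (- sg * ln 2)).
  set (E4 := exp (-4 * ln W)).
  assert (Hp : 0 < p) by (unfold p; lra).
  assert (Hq : 0 < q2) by (unfold q2; lra).
  assert (HA : 0 <= A) by (left; apply exp_pos).
  assert (Hc2 : 0 < c2) by apply exp_pos.
  assert (HK0 : 0 < K0) by apply exp_pos.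
  assert (HE4 : 0 < E4) by apply exp_pos.
  assert (HK2 : 0 < K2) by (apply Rinv_0_lt_compat; nra).
  assert (HlZ : ln 2 <= ln Z) by (apply ln_le; lra).
  assert (HZW' : ln Z <= ln W) by (apply ln_le; lra).
  pose proof ln2_pos.
  assert (HPhi0 : forall x, 1 <= x -> 0 <= Phi p q2 K2 W x).
  { intros x Hx. unfold Phi. destruct (Rle_dec x W).
    - assert (exp (p * ln x) <= exp (p * ln (W+1))).
      { apply exp_le. apply Rmult_le_compat_l; [lra|]. apply ln_le; lra. }
      pose proof (exp_pos (- q2 * ln W)).
      assert (0 <= 2 / p * E4) by (unfold Rdiv; apply Rmult_le_pos; [apply Rmult_le_pos; [lra|left; apply Rinv_0_lt_compat; lra]|lra]).
      fold E4. nra.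
    - pose proof (exp_pos (- q2 * ln x)). nra. }
  intros N. pose (Y := fun k => K0 * (2 * A / INR (S k) + Phi p q2 K2 W (INR (S k)))).
  apply Rle_trans with (Y O).
  2:{ unfold Y. replace (INR (S O)) with 1 by (simpl; ring).
      apply Rmult_le_compat_l; [lra|].
      unfold Rdiv at 1; rewrite Rinv_1, Rmult_1_r. apply Rplus_le_compat_l.
      fold p q2 c2 K2 B. unfold Phi. destruct (Rle_dec 1 W) as [_|n]; [|lra].
      rewrite ln_1, Rmult_0_r, exp_0.
      assert (HW1 : ln (W+1) <= ln 2 + ln W).
      { rewrite <- ln_mult by lra. apply ln_le; lra. }
      assert (E1 : E4 * exp (p * ln (W+1)) <= exp (p * ln 2) * B).
      { unfold E4, B. rewrite <- !exp_plus. apply exp_le. unfold p in *. nra. }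
      assert (E2 : exp (- q2 * ln W) = B) by (unfold B, q2; f_equal; ring).
      rewrite E2. fold E4.
      assert (0 <= 2 / p) by (unfold Rdiv; apply Rmult_le_pos; [lra|left; apply Rinv_0_lt_compat; lra]).
      apply Rle_trans with (2 / p * (E4 * exp (p * ln (W+1))) + K2 * B).
      { apply Rplus_le_compat_r. rewrite <- Rmult_assoc.
        apply Rmult_le_compat_l; [nra|]. lra. }
      apply Rle_trans with (2 / p * (exp (p * ln 2) * B) + K2 * B); [|right; ring].
      apply Rplus_le_compat_r. apply Rmult_le_compat_l; auto. }
  apply tele_bound.
  2:{ intros k. unfold Y. pose proof (INR_S_ge1 k). pose proof (HPhi0 _ H0).
      apply Rmult_le_pos; [lra|]. apply Rplus_le_le_0_compat; auto.
      unfold Rdiv. apply Rmult_le_pos; [lra|]. left; apply Rinv_0_lt_compat; lra. }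
  intros k. unfold Y. rewrite (S_INR (S k)).
  pose proof (INR_S_ge1 k). set (x := INR (S k)) in *.
  assert (Hstep1 := step_inv2 A x HA H0).
  assert (Hl : 0 <= ln x) by (apply ln_pos'; lra).
  set (l := ln x) in *.
  assert (Hlx1 : l <= ln (x+1)) by (apply ln_le; lra).
  assert (Hdec : 0 <= Phi p q2 K2 W x - Phi p q2 K2 W (x+1)).
  { assert (H2pE : 0 <= 2 / p * E4) by (unfold Rdiv; apply Rmult_le_pos; [apply Rmult_le_pos; [lra|left; apply Rinv_0_lt_compat; lra]|lra]).
    unfold Phi. fold E4 l. destruct (Rle_dec x W) as [h1|h1]; destruct (Rle_dec (x+1) W) as [h2|h2].
    - assert (exp (p * l) <= exp (p * ln (x+1))) by (apply exp_le; nra).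
      assert (0 <= 2 / p * E4 * (exp (p * ln (x+1)) - exp (p * l))) by (apply Rmult_le_pos; lra).
      lra.
    - assert (exp (p * l) <= exp (p * ln (W+1))) by (apply exp_le; apply Rmult_le_compat_l; [lra|]; apply ln_le; lra).
      assert (ln W <= ln (x+1)) by (apply ln_le; lra).
      assert (exp (- q2 * ln (x+1)) <= exp (-q2 * ln W)) by (apply exp_le; nra).
      assert (0 <= 2 / p * E4 * (exp (p * ln (W+1)) - exp (p * l))) by (apply Rmult_le_pos; lra).
      assert (0 <= K2 * (exp (-q2 * ln W) - exp (- q2 * ln (x+1)))) by (apply Rmult_le_pos; lra).
      lra.
    - lra.
    - assert (exp (- q2 * ln (x+1)) <= exp (-q2 * l)) by (apply exp_le; nra).
      assert (0 <= K2 * (exp (-q2 * l) - exp (- q2 * ln (x+1)))) by (apply Rmult_le_pos; lra).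
      lra. }
  assert (HtmA : l <= ln Z -> tm sg Z W k <= K0 * (A * / (x * x))).
  { intros Hc. eapply Rle_trans; [apply tm_up1; lra|]. fold x l.
    rewrite <- exp_m2ln by lra. fold l.
    assert (HL := LSE_le (2*l) (2 * ln Z) ltac:(lra)).
    unfold K0, A. rewrite <- !exp_plus. apply exp_le. nra. }
  assert (Hd1 : 0 <= 2 * A / x - 2 * A / (x + 1)).
  { apply Rle_trans with (A * / (x*x)); auto. apply Rmult_le_pos; auto. left; apply Rinv_0_lt_compat; nra. }
  destruct (Rle_or_lt l (ln Z)) as [Hc|Hc].
  { apply Rle_trans with (K0 * (A * / (x*x))); auto.
    apply Rle_trans with (K0 * ((2 * A / x - 2 * A / (x + 1)) + (Phi p q2 K2 W x - Phi p q2 K2 W (x+1)))); [|right; ring].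
    apply Rmult_le_compat_l; lra. }
  assert (HL := LSE_le' (2*l) (2 * ln Z) ltac:(lra)).
  apply Rle_trans with (K0 * (Phi p q2 K2 W x - Phi p q2 K2 W (x+1))).
  2:{ apply Rle_trans with (K0 * ((2 * A / x - 2 * A / (x + 1)) + (Phi p q2 K2 W x - Phi p q2 K2 W (x+1)))); [|right; ring].
      apply Rmult_le_compat_l; lra. }
  unfold Phi. fold E4 l. destruct (Rle_dec x W) as [h1|h1].
  -
    apply Rle_trans with (K0 * (E4 * exp ((p-1) * l))).
    { eapply Rle_trans; [apply tm_up1; lra|]. fold x l.
      unfold K0, E4, p. rewrite <- !exp_plus. apply exp_le. nra. }
    apply Rmult_le_compat_l; [lra|].
    assert (Hb := Lb x p H0 Hp). fold l in Hb.
    assert (H2p : 0 < 2 / p) by (unfold Rdiv; apply Rmult_lt_0_compat; [lra|apply Rinv_0_lt_compat; lra]).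
    assert (Hb' : E4 * exp ((p-1)*l) <= 2 / p * E4 * (exp (p * ln (x+1)) - exp (p * l))).
    { apply Rle_trans with (2 / p * E4 * (p / 2 * exp ((p - 1) * l))).
      right; field; lra. apply Rmult_le_compat_l; nra. }
    destruct (Rle_dec (x+1) W) as [h2|h2].
    + fold E4. lra.
    + assert (exp (p * ln (x+1)) <= exp (p * ln (W+1))) by (apply exp_le; apply Rmult_le_compat_l; [lra|]; apply ln_le; lra).
      assert (ln W <= ln (x+1)) by (apply ln_le; lra).
      assert (exp (- q2 * ln (x+1)) <= exp (-q2 * ln W)) by (apply exp_le; nra).
      assert (2 / p * E4 * (exp (p * ln (x+1)) - exp (p * l)) <= 2 / p * E4 * (exp (p * ln (W+1)) - exp (p * l))) by (apply Rmult_le_compat_l; nra).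
      assert (0 <= K2 * (exp (-q2 * ln W) - exp (- q2 * ln (x+1)))) by (apply Rmult_le_pos; lra).
      lra.
  - destruct (Rle_dec (x+1) W) as [h2|h2]; [lra|].
    apply Rle_trans with (K0 * exp ((-q2-1) * l)).
    { eapply Rle_trans; [apply tm_up2; lra|]. fold x l.
      unfold K0, q2. rewrite <- !exp_plus. apply exp_le. nra. }
    apply Rmult_le_compat_l; [lra|].
    assert (Ha := La x q2 H0 Hq). fold l c2 in Ha.
    apply Rle_trans with (K2 * (q2 * c2 * exp ((- q2 - 1) * l))).
    { right. unfold K2. field. lra. }
    apply Rle_trans with (K2 * (exp (- q2 * l) - exp (- q2 * ln (x + 1)))); [|right; ring].
    apply Rmult_le_compat_l; lra.
Qed.

Lemma LA (sg Z W : R) : sg < 2 -> 2 <= Z -> Z <= W ->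
  / 8 * exp (-4 * ln W - 2 * sg * ln Z) <= tm sg Z W O.
Proof.
  intros Hs HZ HZW.
  assert (HlZ : ln 2 <= ln Z) by (apply ln_le; lra).
  assert (HZW' : ln Z <= ln W) by (apply ln_le; lra).
  pose proof ln2_pos.
  eapply Rle_trans; [|apply tm_low; try lra; rewrite ln_INR1; lra].
  rewrite ln_INR1. set (L0 := ln (exp (2 * 0) + exp (2 * ln Z))).
  assert (H1 : 2 * ln Z <= L0) by apply LSE_ge2.
  assert (H2 : L0 <= ln 2 + 2 * ln Z) by (apply LSE_le; lra).
  assert (E : / 8 = / 2 * exp (- (2 * ln 2))).
  { rewrite exp_Ropp. replace (2 * ln 2) with (ln 2 + ln 2) by ring. rewrite exp_plus, exp_ln by lra.
    field. }
  rewrite E, Rmult_assoc. apply Rmult_le_compat_l; [lra|].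
  rewrite <- exp_plus. apply exp_le.
  destruct (Rle_or_lt 0 sg); nra.
Qed.

Lemma LB (sg Z W : R) : sg < -1/2 -> 2 <= Z -> Z <= W ->
  forall N, W < INR (S (S N)) ->
  / (2 * (-2*sg-1) * exp (-2*sg-1)) * (exp ((-2*sg-5) * ln W) - exp (-4 * ln W))
    <= sum_f_R0 (tm sg Z W) N.
Proof.
  intros Hs HZ HZW N HN.
  set (p := -2*sg-1). set (E4 := exp (-4 * ln W)). set (c := / (2 * p * exp p)).
  assert (Hp : 0 < p) by (unfold p; lra).
  assert (Hc : 0 < c) by (apply Rinv_0_lt_compat; pose proof (exp_pos p); nra).
  assert (HE4 : 0 < E4) by apply exp_pos.
  assert (HlZ : ln 2 <= ln Z) by (apply ln_le; lra).
  assert (HZW' : ln Z <= ln W) by (apply ln_le; lra).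
  pose proof ln2_pos.
  pose (Lp := fun k => c * E4 * (if Rle_dec (INR (S k)) W then exp (p * ln (INR (S k))) else exp (p * ln W))).
  assert (Hcl : forall k, Lp (S k) - Lp k <= tm sg Z W k).
  { intros k. unfold Lp. rewrite (S_INR (S k)).
    pose proof (INR_S_ge1 k). set (x := INR (S k)) in *.
    assert (Hl : 0 <= ln x) by (apply ln_pos'; lra).
    set (l := ln x) in *.
    pose proof (tm_pos sg Z W k ltac:(lra) ltac:(lra)).
    assert (Hc1 := Lc x p H0 Hp). fold l in Hc1.
    assert (Hce : 0 < c * E4) by nra.
    assert (Key : x <= W -> c * E4 * (exp (p * ln (x+1)) - exp (p * l)) <= tm sg Z W k).
    { intros hx. eapply Rle_trans; [|apply tm_low; [lra|lra|]]; [|unfold l, x; apply ln_le; fold x; lra].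
      fold x l.
      assert (HL := LSE_ge1 (2*l) (2 * ln Z)).
      apply Rle_trans with (c * E4 * (p * exp p * exp ((p - 1) * l))).
      { apply Rmult_le_compat_l; lra. }
      apply Rle_trans with (/2 * (E4 * exp ((p-1) * l))).
      { right. unfold c. field. split; [apply Rgt_not_eq, exp_pos | lra]. }
      apply Rmult_le_compat_l; [lra|]. unfold E4. rewrite <- exp_plus. apply exp_le.
      unfold p. nra. }
    destruct (Rle_dec x W) as [h1|h1]; destruct (Rle_dec (x+1) W) as [h2|h2].
    - rewrite <- Rmult_minus_distr_l. apply Key; auto.
    - rewrite <- Rmult_minus_distr_l. eapply Rle_trans; [|apply Key; auto].
      apply Rmult_le_compat_l; [lra|]. apply Rplus_le_compat_r. apply exp_le.
      apply Rmult_le_compat_l; [lra|]. apply ln_le; lra.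
    - lra.
    - lra. }
  pose proof (tele_low _ _ Hcl N).
  eapply Rle_trans; [|exact H0].
  unfold Lp. rewrite ln_INR1. replace (INR (S O)) with 1 by (simpl; ring).
  destruct (Rle_dec 1 W) as [_|n]; [|lra].
  destruct (Rle_dec (INR (S (S N))) W) as [n|_]; [lra|].
  rewrite Rmult_0_r, exp_0.
  assert (exp ((-2*sg-5) * ln W) = E4 * exp (p * ln W)).
  { unfold E4, p. rewrite <- exp_plus. f_equal. ring. }
  rewrite H1. fold c. right; ring.
Qed.


Lemma sqrt_exp (x : R) : sqrt (exp x) = exp (x / 2).
Proof. replace (exp x) with (exp (x/2) * exp (x/2)).
  apply sqrt_square. left; apply exp_pos. rewrite <- exp_plus. f_equal. field. Qed.

Lemma part1 (sg : R) : -1/2 < sg -> sg < 3/2 -> exists C, 0 < C /\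
  forall Z W, 2 <= Z -> Z <= W ->
   / 8 * exp (-4 * ln W - 2 * sg * ln Z) <= Series (tm sg Z W) /\
   Series (tm sg Z W) <= C * exp (-4 * ln W - 2 * sg * ln Z).
Proof.
  intros H1 H2.
  assert (Hgen : forall C, 0 < C -> (forall Z W, 2 <= Z -> Z <= W -> forall N,
     sum_f_R0 (tm sg Z W) N <= C * exp (-4 * ln W - 2 * sg * ln Z)) ->
    exists C, 0 < C /\ forall Z W, 2 <= Z -> Z <= W ->
   / 8 * exp (-4 * ln W - 2 * sg * ln Z) <= Series (tm sg Z W) /\
   Series (tm sg Z W) <= C * exp (-4 * ln W - 2 * sg * ln Z)).
  { intros C HC HU. exists C. split; auto. intros Z W HZ HZW.
    destruct (series_bnd (tm sg Z W) _ (fun k => Rlt_le _ _ (tm_pos sg Z W k ltac:(lra) ltac:(lra))) (HU Z W HZ HZW)) as [Hs Hl].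
    split; auto. eapply Rle_trans; [apply LA; lra|]. apply (Hl O). }
  destruct (Rle_or_lt 0 sg) as [h|h].
  - apply (Hgen 2); [lra|]. intros; apply U_pos; auto.
  - apply (Hgen (exp (- sg * ln 2) * (2 + / ((1 + 2*sg) * exp (-((1+2*sg)+1) * ln 2))))).
    + apply Rmult_lt_0_compat; [apply exp_pos|]. pose proof (exp_pos (-((1+2*sg)+1) * ln 2)).
      assert (0 < / ((1 + 2*sg) * exp (-((1+2*sg)+1) * ln 2))) by (apply Rinv_0_lt_compat; nra). lra.
    + intros; apply U_mid; auto.
Qed.

Lemma exists_N (W : R) : 0 < W -> exists N, W < INR (S (S N)).
Proof. intros HW. destruct (archimed W) as [h1 h2].
  assert (0 < up W)%Z by (apply lt_0_IZR; lra).
  exists (Z.to_nat (up W)). rewrite !S_INR, INR_IZR_INZ, Z2Nat.id by lia. lra. Qed.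

Lemma part2 (sg : R) : -5/2 < sg -> sg < -1/2 -> exists c C, 0 < c /\ 0 < C /\
  forall Z W, 2 <= Z -> Z <= W ->
   c * exp (-4 * ln W - 2 * sg * ln Z) <= Series (tm sg Z W) /\
   c * exp ((-2*sg-5) * ln W) <= Series (tm sg Z W) /\
   Series (tm sg Z W) <= C * (exp (-4 * ln W - 2 * sg * ln Z) + exp ((-2*sg-5) * ln W)).
Proof.
  intros H1 H2.
  set (p := -2*sg-1).
  set (K0 := exp (- sg * ln 2)).
  set (KB := 2 / (-2*sg-1) * exp ((-2*sg-1) * ln 2) + / ((5+2*sg) * exp (-((5+2*sg)+1) * ln 2))).
  set (cc := / (2 * p * exp p)).
  set (cB := cc * (1 - exp (- p * ln 2))).
  assert (Hp : 0 < p) by (unfold p; lra).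
  assert (HK0 : 0 < K0) by apply exp_pos.
  assert (HKB : 0 < KB).
  { unfold KB. pose proof (exp_pos ((-2*sg-1) * ln 2)). pose proof (exp_pos (-((5+2*sg)+1) * ln 2)).
    assert (0 < / ((5+2*sg) * exp (-((5+2*sg)+1) * ln 2))) by (apply Rinv_0_lt_compat; nra).
    assert (0 < 2 / (-2*sg-1)) by (unfold Rdiv; apply Rmult_lt_0_compat; [lra|apply Rinv_0_lt_compat; lra]).
    nra. }
  assert (Hcc : 0 < cc) by (apply Rinv_0_lt_compat; pose proof (exp_pos p); nra).
  pose proof ln2_pos.
  assert (Hlt : exp (- p * ln 2) < 1) by (rewrite <- exp_0; apply exp_increasing; nra).
  assert (HcB : 0 < cB) by (unfold cB; nra).
  exists (Rmin (/8) cB), (K0 * (2 + KB)).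
  split; [apply Rmin_glb_lt; lra|]. split; [nra|].
  intros Z W HZ HZW.
  set (A := exp (-4 * ln W - 2 * sg * ln Z)). set (B := exp ((-2*sg-5) * ln W)).
  assert (HA : 0 < A) by apply exp_pos. assert (HB : 0 < B) by apply exp_pos.
  assert (HU : forall N, sum_f_R0 (tm sg Z W) N <= K0 * (2 + KB) * (A + B)).
  { intros N. eapply Rle_trans; [apply U_neg; auto|]. fold K0 A B KB. apply Rle_trans with (K0 * ((2+KB)*(A+B))); [apply Rmult_le_compat_l; nra | right; ring]. }
  destruct (series_bnd (tm sg Z W) _ (fun k => Rlt_le _ _ (tm_pos sg Z W k ltac:(lra) ltac:(lra))) HU) as [Hs Hl].
  assert (Hm1 : Rmin (/8) cB <= /8) by apply Rmin_l.
  assert (Hm2 : Rmin (/8) cB <= cB) by apply Rmin_r.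
  assert (Hm0 : 0 < Rmin (/8) cB) by (apply Rmin_glb_lt; lra).
  split; [|split; auto].
  - apply Rle_trans with (/8 * A); [apply Rmult_le_compat_r; lra|].
    eapply Rle_trans; [apply LA; lra|]. apply (Hl O).
  - apply Rle_trans with (cB * B); [apply Rmult_le_compat_r; lra|].
    destruct (exists_N W ltac:(lra)) as [N HN].
    eapply Rle_trans; [|apply (Hl N)].
    eapply Rle_trans; [|apply LB; eauto]. fold p cc B.
    assert (exp (-4 * ln W) <= exp (- p * ln 2) * B).
    { unfold B. rewrite <- exp_plus. apply exp_le.
      assert (ln 2 <= ln W) by (apply ln_le; lra). unfold p in *. nra. }
    unfold cB. nra.
Qed.


Lemma jz_ge2 (z1 z2 : Z) : (z1 <> 0%Z \/ z2 <> 0%Z) -> 2 <= jz z1 z2.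
Proof.
  intros Hz. unfold jz.
  assert (Hsq : forall z : Z, z <> 0%Z -> 1 <= IZR z ^ 2).
  { intros z hz. destruct (Z_lt_le_dec 0 z).
    - assert (1 <= IZR z) by (apply IZR_le; lia). nra.
    - assert (IZR z <= -1) by (apply IZR_le; lia). nra. }
  assert (1 <= IZR z1 ^ 2 + IZR z2 ^ 2).
  { destruct Hz as [h|h]; pose proof (Hsq _ h); pose proof (pow2_ge_0 (IZR z1)); pose proof (pow2_ge_0 (IZR z2)); lra. }
  apply sqrt_le_1_alt in H. rewrite sqrt_1 in H. lra.
Qed.

Lemma jz_le_jw (lam : C) (z1 z2 : Z) : 0 <= jz z1 z2 -> jz z1 z2 <= jw lam z1 z2.
Proof. intros H. unfold jw. rewrite <- (sqrt_pow2 (jz z1 z2)) at 1 by auto.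
  apply sqrt_le_1_alt. pose proof (Cmod_ge_0 lam). lra. Qed.

Lemma M_eq (sg : R) (lam : C) (z1 z2 : Z) :
  M_sigma sg lam z1 z2 = sqrt (Series (tm sg (jz z1 z2) (jw lam z1 z2))).
Proof. reflexivity. Qed.

Lemma T1_eq (sg Z W : R) : 0 < Z -> 0 < W ->
  Rpower Z (- sg) / W ^ 2 = sqrt (exp (-4 * ln W - 2 * sg * ln Z)).
Proof. intros HZ HW. rewrite sqrt_exp. unfold Rpower, Rdiv. rewrite pow_exp by auto.
  rewrite <- exp_Ropp, <- exp_plus. f_equal. simpl INR. field. Qed.

Lemma T2_eq (sg W : R) : 0 < W ->
  Rpower W (- sg) / Rpower W (5/2) = sqrt (exp ((-2*sg-5) * ln W)).
Proof. intros HW. rewrite sqrt_exp. unfold Rpower, Rdiv.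
  rewrite <- exp_Ropp, <- exp_plus. f_equal. field. Qed.

Theorem lemma9 (a nu d1 d2 sigma : R)
  (Ha : 0 < a) (Hnu : 0 < nu) (Hd1 : 0 < d1)
  (Hd2 : d2 < Rmin (nu * PI ^ 2 / (2 * a ^ 2)) (nu / 2))
  (Hs1 : -5/2 < sigma) (Hs2 : sigma < 3/2) (Hs3 : sigma <> -1/2) :
  (-1/2 < sigma ->
     sim_on d1 d2 (M_sigma sigma)
       (fun lam z1 z2 => Rpower (jz z1 z2) (- sigma) / (jw lam z1 z2) ^ 2))
  /\
  (sigma < -1/2 ->
     let kappa := (2 * sigma + 1) / (2 * sigma) in
     sim_on d1 d2 (M_sigma sigma)
       (fun lam z1 z2 =>
          Rpower (jz z1 z2) (- sigma) / (jw lam z1 z2) ^ 2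
            * ind_le (Rpower (jw lam z1 z2) kappa) (jz z1 z2)
          + Rpower (jw lam z1 z2) (- sigma) / Rpower (jw lam z1 z2) (5/2)
            * ind_le (jz z1 z2) (Rpower (jw lam z1 z2) kappa))).
Proof.
  split.
  - intros h. destruct (part1 sigma h Hs2) as [Cc [HC HP]].
    exists (sqrt (/8)), (sqrt Cc). split; [apply sqrt_lt_R0; lra|]. split; [apply sqrt_lt_R0; lra|].
    intros lam z1 z2 _ Hz. pose proof (jz_ge2 z1 z2 Hz). pose proof (jz_le_jw lam z1 z2 ltac:(lra)).
    rewrite M_eq, T1_eq by lra.
    set (Z0 := jz z1 z2) in *. set (W := jw lam z1 z2) in *.
    destruct (HP Z0 W H H0) as [h1 h2].
    set (A := exp (-4 * ln W - 2 * sigma * ln Z0)) in *.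
    assert (0 <= A) by (left; apply exp_pos).
    split.
    + rewrite <- sqrt_mult_alt by lra. apply sqrt_le_1_alt; auto.
    + rewrite <- sqrt_mult_alt by lra. apply sqrt_le_1_alt; auto.
  - intros h kappa. destruct (part2 sigma Hs1 h) as [c [Cc [Hc [HC HP]]]].
    exists (sqrt c / 2), (sqrt (2 * Cc)).
    split. { pose proof (sqrt_lt_R0 c Hc). lra. }
    split; [apply sqrt_lt_R0; lra|].
    intros lam z1 z2 _ Hz. pose proof (jz_ge2 z1 z2 Hz). pose proof (jz_le_jw lam z1 z2 ltac:(lra)).
    rewrite M_eq, T1_eq, T2_eq by lra.
    set (Z0 := jz z1 z2) in *. set (W := jw lam z1 z2) in *.
    destruct (HP Z0 W H H0) as [h1 [h2 h3]].
    set (A := exp (-4 * ln W - 2 * sigma * ln Z0)) in *.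
    set (B := exp ((-2*sigma-5) * ln W)) in *.
    set (S := Series (tm sigma Z0 W)) in *.
    assert (HA : 0 < A) by apply exp_pos. assert (HB : 0 < B) by apply exp_pos.
    assert (Hkey : Rpower W kappa <= Z0 <-> B <= A).
    { assert (Htk : -2*sigma * kappa = -(2*sigma+1)) by (unfold kappa; field; lra).
      assert (E : -2*sigma*(kappa*ln W) = -(2*sigma+1)*ln W) by (rewrite <- Rmult_assoc, Htk; ring).
      unfold Rpower. rewrite <- (exp_ln Z0) at 1 by lra.
      unfold A, B. split; intros hh.
      - apply exp_le_inv' in hh. apply exp_le.
        assert (-2*sigma*(kappa*ln W) <= -2*sigma*ln Z0) by (apply Rmult_le_compat_l; lra).
        lra.
      - apply exp_le_inv' in hh. apply exp_le.
        apply (Rmult_le_reg_l (-2*sigma)); [lra|]. lra. }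
    set (m := Rmax A B).
    assert (HmA : A <= m) by apply Rmax_l. assert (HmB : B <= m) by apply Rmax_r.
    assert (Hm : m = A \/ m = B) by (unfold m, Rmax; destruct (Rle_dec A B); auto).
    assert (HSl : c * m <= S) by (destruct Hm as [e|e]; rewrite e; auto).
    assert (HSu : S <= 2 * Cc * m) by nra.
    assert (Hsm : 0 <= sqrt m) by apply sqrt_pos.
    assert (HT : sqrt m <= sqrt A * ind_le (Rpower W kappa) Z0 + sqrt B * ind_le Z0 (Rpower W kappa)
              <= 2 * sqrt m).
    { unfold ind_le. pose proof (sqrt_pos A); pose proof (sqrt_pos B).
      destruct (Rle_dec (Rpower W kappa) Z0) as [i1|i1]; destruct (Rle_dec Z0 (Rpower W kappa)) as [i2|i2].
      - assert (hBA : B <= A) by (apply Hkey; auto). assert (hm : m = A) by (unfold m, Rmax; destruct (Rle_dec A B); lra).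
        rewrite hm. assert (sqrt B <= sqrt A) by (apply sqrt_le_1_alt; auto). lra.
      - assert (hBA : B <= A) by (apply Hkey; auto). assert (hm : m = A) by (unfold m, Rmax; destruct (Rle_dec A B); lra).
        rewrite hm. lra.
      - assert (hBA : ~ B <= A) by (intro; apply i1; apply Hkey; auto).
        assert (hm : m = B) by (unfold m, Rmax; destruct (Rle_dec A B); lra). rewrite hm. lra.
      - lra. }
    split.
    + apply Rle_trans with (sqrt c / 2 * (2 * sqrt m)).
      { apply Rmult_le_compat_l; [pose proof (sqrt_pos c); lra|]. apply HT. }
      replace (sqrt c / 2 * (2 * sqrt m)) with (sqrt (c * m)) by (rewrite sqrt_mult_alt by lra; field).
      apply sqrt_le_1_alt; auto.
    + apply Rle_trans with (sqrt (2 * Cc) * sqrt m).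
      { rewrite <- sqrt_mult_alt by lra. apply sqrt_le_1_alt; auto. }
      apply Rmult_le_compat_l; [apply sqrt_pos|]. apply HT.
Qed.
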